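(* For an odd integer $n>1$ and an integer $m\geq 3$, $$\chi_{ld}(P_{m}[\overline{K_{n}}])\leq \begin{cases}4 &\text{if } m\equiv 1 \pmod 4,\\ 3 &\text{if } m\equiv 3 \pmod 4,\\ 4 &\text{if $m$ is even.}\end{cases}$$
   Context: All graphs are finite, simple and undirected. For a graph $G=(V,E)$ of order $N$ without isolated vertices, a bijection $f\colon V\to\{1,2,\dots,N\}$ is a local distance antimagic labeling if $w(u)\neq w(v)$ for every edge $uv$, where $w(u)=\sum_{x\in N(u)}f(x)$ and $N(u)$ is the open neighborhood of $u$. $\chi_{ld}(G)$ is the minimum number of distinct weights over all local distance antimagic labelings of $G$. $P_m$ is the path on $m$ vertices, $\overline{K_n}$ the edgeless graph on $n$ vertices. The lexicographic product $G[H]$ has vertex set $V(G)\times V(H)$, with $(g,h)$ adjacent to $(g',h')$ iff $gg'\in E(G)$, or $g=g'$ and $hh'\in E(H)$. *)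

(* Defs.v *)
From mathcomp Require Import all_boot.
Set Implicit Arguments.
Unset Strict Implicit.
Unset Printing Implicit Defensive.

(* A simple graph is a symmetric irreflexive relation e on a finType. *)

Definition path_rel (m : nat) : rel 'I_m :=
  fun i j => (i.+1 == j :> nat) || (j.+1 == i :> nat).

Definition edgeless_rel (n : nat) : rel 'I_n := fun _ _ => false.

Definition lexprod (T1 T2 : finType) (e1 : rel T1) (e2 : rel T2) : rel (T1 * T2) :=
  fun x y => e1 x.1 y.1 || ((x.1 == y.1) && e2 x.2 y.2).

(* A labeling f : V -> 'I_N represents the labels (f x).+1 in {1,...,N}. *)
Definition label (T : finType) (f : {ffun T -> 'I_#|T|}) (x : T) : nat :=
  (f x).+1.

Definition weight (T : finType) (e : rel T) (f : {ffun T -> 'I_#|T|}) (u : T) : nat :=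
  \sum_(x | e u x) label f x.

Definition is_ldal (T : finType) (e : rel T) (f : {ffun T -> 'I_#|T|}) : bool :=
  injectiveb f && [forall u, forall v, e u v ==> (weight e f u != weight e f v)].

Definition num_weights (T : finType) (e : rel T) (f : {ffun T -> 'I_#|T|}) : nat :=
  size (undup [seq weight e f u | u <- enum T]).

(* chi_ld: minimum number of distinct weights over all local distance
   antimagic labelings (default #|T|.+1 if none exists, so that an upper
   bound chi_ld <= k with k <= #|T| entails existence). *)
Definition chi_ld (T : finType) (e : rel T) : nat :=
  \big[minn/#|T|.+1]_(f : {ffun T -> 'I_#|T|} | is_ldal e f) num_weights e f.
Arguments path_rel m : clear implicits.
Arguments edgeless_rel n : clear implicits.

(* Main.v *)
Require Import Defs.
From mathcomp Require Import all_boot.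
From mathcomp Require Import zify.

Lemma minle (I : eqType) (r : seq I) (P : pred I) (F : I -> nat) x i0 :
  i0 \in r -> P i0 -> \big[minn/x]_(i <- r | P i) F i <= F i0.
Proof.
elim: r => //= a r IH; rewrite in_cons big_cons; case/orP => [/eqP<- ->|/IH H /H].
  exact: geq_minl.
case: (P a) => // h; exact: leq_trans (geq_minr _ _) h.
Qed.

Arguments minle {I r P F x i0}.

Definition Jf (m i : nat) : nat :=
  if i %% 2 == 0 then m - 1 - i %/ 2 else m %/ 2 - 1 - i %/ 2.

Definition pif (t m j i : nat) : nat :=
  if j < t.*2 then (if odd j then m - 1 - i else i)
  else if j == t.*2 then i else Jf m i.

Definition vf (t m i j : nat) : nat := j * m + pif t m j i.

Lemma pif_lt t m j i : i < m -> pif t m j i < m.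
Proof.
rewrite /pif /Jf => im; case: ifP => _; first by case: ifP => _; lia.
case: ifP => _ //; case: ifP => _; lia.
Qed.

Lemma pif_inj t m j i i' : i < m -> i' < m -> pif t m j i = pif t m j i' -> i = i'.
Proof.
rewrite /pif /Jf => im i'm; case: ifP => _; first by case: ifP => _; lia.
case: ifP => _ //; do 2 case: ifP => /eqP ?; lia.
Qed.

Lemma vf_lt t m (i : 'I_m) (j : 'I_(t.*2.+3)) : vf t m i j < m * t.*2.+3.
Proof.
rewrite /vf; have := @pif_lt t m j i (ltn_ord i); have := ltn_ord j.
move=> hj hp; apply: (@leq_trans (j * m + m)); first by rewrite ltn_add2l.
by rewrite -mulSnr mulnC leq_mul2l hj orbT.
Qed.

Lemma vf_inj t m (i i' : 'I_m) (j j' : 'I_(t.*2.+3)) :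
  vf t m i j = vf t m i' j' -> i = i' /\ j = j'.
Proof.
rewrite /vf => h.
have m0 : 0 < m by case: m i {h i'} => [[]|].
have hp := @pif_lt t m j i (ltn_ord i); have hp' := @pif_lt t m j' i' (ltn_ord i').
have := congr1 (fun v => v %/ m) h; rewrite /= !divnMDl // !divn_small // !addn0 => ejj.
have jj : j = j' by apply: val_inj.
subst j'; move/addnI: h => /pif_inj => /(_ (ltn_ord i) (ltn_ord i')) ii.
by split => //; apply: val_inj.
Qed.

Lemma alt_sum t m r : r < m ->
  \sum_(j < t.*2) pif t m j r = t * (m - 1).
Proof.
move=> rm.
rewrite (eq_bigr (fun j : 'I_(t.*2) => if odd j then m - 1 - r else r)); last first.
  by move=> j _; rewrite /pif ltn_ord.
elim: t => [|t IH]; first by rewrite big_ord0.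
rewrite doubleS !big_ord_recr /= IH odd_double /=; lia.
Qed.

Lemma ind_sum m a (F : nat -> nat) :
  \sum_(k < m) (k == a :> nat) * F k = (a < m) * F a.
Proof.
elim: m => [|m IH]; first by rewrite big_ord0.
rewrite big_ord_recr /= IH ltnS.
case: (eqVneq m a) => [->|ne] /=.
  by rewrite ltnn leqnn mul0n mul1n.
rewrite mul0n addn0 [(a <= m)]leq_eqVlt; case: eqP => //= e; by rewrite e eqxx in ne.
Qed.

Lemma auxS (k i : nat) : (k.+1 == i) = (k == i.-1) && (0 < i).
Proof. by case: i => [|i]; rewrite ?andbT ?andbF. Qed.

Lemma nbr_sum m (i : 'I_m) (F : nat -> nat) :
  \sum_(i' < m | path_rel m i i') F i' =
  (0 < i) * F i.-1 + (i.+1 < m) * F i.+1.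
Proof.
rewrite big_mkcond /=.
rewrite (eq_bigr (fun k : 'I_m => (k == i.+1 :> nat) * F k + (k == i.-1 :> nat) * ((0 < i) * F k))); last first.
  move=> k _; rewrite /path_rel eq_sym auxS.
  case: eqP => e1; case: eqP => e2; case: (0 < i) => //=; rewrite ?mul1n ?mul0n ?addn0 ?add0n //; lia.
rewrite big_split /= (ind_sum m i.+1 F).
rewrite (ind_sum m i.-1 (fun k => (0 < i) * F k)).
case: (posnP i) => [i0|ip]; first by rewrite i0 /= !(mul0n, muln0, addn0, add0n).
rewrite (leq_ltn_trans (leq_pred _) (ltn_ord i)) /= mul1n; lia.
Qed.

Lemma Jsum m r : r < m -> r + Jf m r + Jf m r =
  if r %% 2 == 0 then (m.*2 - 2) else (m %/ 2).*2 - 1.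
Proof. rewrite /Jf => rm; case: ifP => /eqP h; lia. Qed.

Section W.
Variables (m K : nat) (R : nat -> nat).
Hypothesis m3 : 3 <= m.
Hypothesis K3 : 3 <= K.
Hypothesis HR : forall r, r < m -> R r = K + r + Jf m r + Jf m r.

Let A := K + (m.*2 - 2).
Let B := K + ((m %/ 2).*2 - 1).

Lemma Rv r : r < m -> R r = if r %% 2 == 0 then A else B.
Proof. move=> rm; rewrite HR // -!addnA (addnA r) Jsum //; by case: ifP. Qed.

Ltac splitifs := repeat match goal with |- context[if ?c then _ else _] => case: (boolP c) => ? end.

Definition wf i := (0 < i) * R i.-1 + (i.+1 < m) * R i.+1.

Lemma w_ne i : i.+1 < m -> wf i != wf i.+1.
Proof.
move=> im; rewrite /wf /= im mul1n.
case: (posnP i) => [i0|ip].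
  subst i; rewrite /= mul0n add0n mul1n.
  rewrite m3 mul1n (Rv 1) // (Rv 0) ?(Rv 2) // /= /A /B; lia.
rewrite !mul1n (Rv i.-1) ?(Rv i.+1) ?(Rv i) //; try lia.
case: (ltnP i.+2 m) => h2 /=.
  rewrite mul1n (Rv i.+2) //.
  splitifs; rewrite /A /B; lia.
rewrite mul0n addn0.
splitifs; rewrite /A /B; lia.
Qed.

Lemma w_in i : i < m ->
  wf i \in (if odd m then [:: B; A.*2; B.*2] else [:: B; A.*2; B.*2; A]).
Proof.
move=> im; rewrite /wf.
have om := modn2 m.
case: (posnP i) => [i0|ip].
  subst i; have h : 1 < m by lia.
  rewrite /= mul0n add0n h mul1n (Rv 1) //=.
  by case: (odd m); rewrite inE eqxx.
rewrite mul1n (Rv i.-1); last lia.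
case: (ltnP i.+1 m) => h1 /=.
  rewrite mul1n (Rv i.+1) //.
  case: (odd m); rewrite !inE; splitifs; rewrite /A /B;
   first [ by apply/orP; right; apply/orP; left; apply/eqP; lia
         | by apply/orP; right; apply/orP; right; rewrite ?inE; apply/orP; left; apply/eqP; lia
         | lia ].
rewrite mul0n addn0.
move: om; case: (odd m) => /= om; rewrite !inE; splitifs; rewrite /A /B;
   first [ by apply/orP; left; apply/eqP; lia
         | by apply/orP; right; apply/orP; right; apply/orP; right; apply/eqP; lia
         | lia ].
Qed.

End W.

Lemma R_form t m : exists K, 3 <= K /\ forall r, r < m ->
  \sum_(j < t.*2.+3) (vf t m r j).+1 = K + r + Jf m r + Jf m r.
Proof.
exists (\sum_(j < t.*2) (j * m).+1 + t * (m - 1) + (t.*2 * m).+1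
        + (t.*2.+1 * m).+1 + (t.*2.+2 * m).+1); split; first by rewrite !addnS.
move=> r rm; rewrite !big_ord_recr /=.
rewrite (eq_bigr (fun j : 'I_(t.*2) => (j * m).+1 + pif t m j r)); last first.
  by move=> j _; rewrite /vf addSn.
rewrite big_split /= alt_sum //.
have p0 : pif t m t.*2 r = r by rewrite /pif ltnn eqxx.
have p1 : pif t m t.*2.+1 r = Jf m r.
  rewrite /pif; case: ifP => ?; first lia; case: ifP => ? //; lia.
have p2 : pif t m t.*2.+2 r = Jf m r.
  rewrite /pif; case: ifP => ?; first lia; case: ifP => ? //; lia.
rewrite /vf p0 p1 p2; lia.
Qed.

Lemma nw_le (T : finType) (g : T -> nat) (L : seq nat) :
  (forall u, g u \in L) -> size (undup [seq g u | u <- enum T]) <= size L.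
Proof.
move=> H; apply: uniq_leq_size; first exact: undup_uniq.
by move=> x; rewrite mem_undup => /mapP [u _ ->].
Qed.

Theorem mainTheorem11 (m n : nat) :
  odd n -> 1 < n -> 3 <= m ->
  chi_ld (lexprod (path_rel m) (edgeless_rel n)) <=
    (if odd m then (if m %% 4 == 1 then 4 else 3) else 4).
Proof.
move=> on n1 m3.
have [t ->] : exists t, n = t.*2.+3.
  exists ((n - 3) %/ 2); have := modn2 n; rewrite on /= => h; lia.
have cT : #|{: 'I_m * 'I_(t.*2.+3)}| = m * t.*2.+3 by rewrite card_prod !card_ord.
pose f : {ffun 'I_m * 'I_(t.*2.+3) -> 'I_#|{: 'I_m * 'I_(t.*2.+3)}|} :=
  [ffun x : 'I_m * 'I_(t.*2.+3) => cast_ord (esym cT) (Ordinal (vf_lt t m x.1 x.2))].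
have lab x : label f x = (vf t m x.1 x.2).+1 by rewrite /label ffunE.
have [K [K3 HK]] := R_form t m.
pose R r := \sum_(j < t.*2.+3) (vf t m r j).+1.
have HR : forall r, r < m -> R r = K + r + Jf m r + Jf m r by exact: HK.
set e := lexprod _ _.
have wE u : weight e f u = wf m R u.1.
  rewrite /weight.
  rewrite (eq_bigl (fun x : 'I_m * 'I_(t.*2.+3) => path_rel m u.1 x.1 && true)); last first.
    by move=> x; rewrite /e /lexprod /edgeless_rel andbF orbF andbT.
  rewrite (eq_bigr (fun x : 'I_m * 'I_(t.*2.+3) => (vf t m x.1 x.2).+1)); last by move=> x _; rewrite lab.
  rewrite -(pair_big (fun i' => path_rel m u.1 i') (fun _ => true)
              (fun (a : 'I_m) (b : 'I_(t.*2.+3)) => (vf t m a b).+1)) /=.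
  by rewrite (nbr_sum m u.1 R).
have ldal : is_ldal e f.
  apply/andP; split.
    apply/injectiveP => [[i j] [i' j']] /(congr1 val); rewrite !ffunE /=.
    by case/vf_inj => -> ->.
  apply/forallP => u; apply/forallP => v; apply/implyP.
  rewrite /e /lexprod /edgeless_rel andbF orbF /path_rel !wE.
  case/orP => /eqP h.
    rewrite -h; apply: (@w_ne m K R m3 K3 HR); rewrite h; exact: ltn_ord.
  rewrite -h eq_sym; apply: (@w_ne m K R m3 K3 HR); rewrite h; exact: ltn_ord.
rewrite /chi_ld; apply: (leq_trans (minle (mem_index_enum f) ldal)).
rewrite /num_weights.
have Hin : forall u : 'I_m * 'I_(t.*2.+3), weight e f u \in _ :=
  fun u => etrans (congr1 (fun z => z \in _) (wE u)) (@w_in m K R m3 K3 HR u.1 (ltn_ord u.1)).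
apply: (leq_trans (@nw_le _ _ _ Hin)).
case: (odd m) => //; by case: (m %% 4 == 1).
Qed.
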